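(* Let $H=\varprojlim\langle\{H_n\},\{h^n_k\}_{k<n}\rangle$ be a profinite poset and $\mathbb{P}=\varprojlim\langle\{P_n\},\{p^n_k\}_{k<n}\rangle$ where $\langle\{P_n\},\{p^n_k\}\rangle$ is a Fraïssé sequence in the category of finite posets with quotient maps, and let $f:\mathbb{P}\to H$ be a continuous quotient map. Then there is a continuous, join-preserving quotient map $q:\mathbb{O}(\mathbb{P})\to\mathbb{O}(H)$ such that $q\circ\phi=\psi\circ f$, where $\phi:\mathbb{P}\to\mathbb{O}(\mathbb{P})$ and $\psi:H\to\mathbb{O}(H)$ are given by $(x_n)\mapsto(\downarrow x_n)$.
   Context: A quotient map between posets is a surjective order-preserving map $\phi:A\to B$ such that for all $a\le b$ in $B$ there are $x\le y$ in $A$ with $\phi(x)=a,\phi(y)=b$. A profinite poset is an inverse limit $\{(x_n)\in\prod_nP_n:p^{n+1}_n(x_{n+1})=x_n\ \forall n\}$ of nonempty finite posets $P_n$ with quotient maps $p^m_k:P_m\to P_k$ ($k<m$, $p^k_l\circ p^m_k=p^m_l$), ordered coordinatewise, with the subspace topology of the product of discrete spaces. Fraïssé sequence: (U) for every finite poset $X$ there are $n$ and a quotient map $P_n\to X$; (A) for every $k$, every finite poset $Y$ and quotient map $f:Y\to P_k$ there exist $\ell>k$ and a quotient map $g:P_\ell\to Y$ with $f\circ g=p^\ell_k$. $\downarrow x=\{m:m\le x\}$; $\mathcal{O}(P_n)$ is the set of down-sets of $P_n$ under inclusion; for a quotient map $p:Q\to R$ of finite posets, $\hat p(\emptyset)=\emptyset$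 and $\hat p(A)=\bigcup_i\downarrow p(a_i)$ over the maximal elements $a_i$ of $A$. For such an inverse system with limit $P$, $\mathbb{O}(P):=\{(A_n)\in\prod_n\mathcal{O}(P_n):\widehat{p^{n+1}_n}(A_{n+1})=A_n\ \forall n\}$, ordered coordinatewise by inclusion and topologized as a subspace of $\prod_n\mathcal{O}(P_n)$ with discrete factors; it is a lattice with join $(A_n)\vee(B_n)=(A_n\cup B_n)$. *)

(* Defs.v *)
From mathcomp Require Import all_boot.
Set Implicit Arguments. Unset Strict Implicit. Unset Printing Implicit Defensive.

Record finPoset := FinPoset {
  carrier :> finType;
  le : rel carrier;
  le_refl : forall x, le x x;
  le_anti : forall x y, le x y -> le y x -> x = y;
  le_trans : forall x y z, le x y -> le y z -> le x z }.
Arguments le {f}.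

Definition fquot (A B : finPoset) (f : A -> B) : Prop :=
  (forall b : B, exists a : A, f a = b) /\
  (forall x y : A, le x y -> le (f x) (f y)) /\
  (forall a b : B, le a b -> exists x y : A, [/\ le x y, f x = a & f y = b]).

Fixpoint bond (P : nat -> finPoset) (p : forall n, P n.+1 -> P n) (k d : nat)
  : P (d + k) -> P k :=
  match d return P (d + k) -> P k with
  | 0 => fun x => x
  | d'.+1 => fun x => @bond P p k d' (p (d' + k) x)
  end.
Arguments bond {P} p k d.
(* bond p k d = p^{d+k}_k *)

Definition inv_system (P : nat -> finPoset) (p : forall n, P n.+1 -> P n) : Prop :=
  (forall n, 0 < #|P n|) /\ (forall n, fquot (p n)).

Definition fraisse (P : nat -> finPoset) (p : forall n, P n.+1 -> P n) : Prop :=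
  (forall X : finPoset, 0 < #|X| -> exists n (g : P n -> X), fquot g) /\
  (forall k (Y : finPoset) (f : Y -> P k), fquot f ->
     exists d (g : P (d.+1 + k) -> Y), fquot g /\ forall x, f (g x) = bond p k d.+1 x).

Definition inlim (P : nat -> finPoset) (p : forall n, P n.+1 -> P n)
  (x : forall n, P n) : Prop := forall n, p n (x n.+1) = x n.

Definition lim_le (P : nat -> finPoset) (x y : forall n, P n) : Prop :=
  forall n, le (x n) (y n).

(** Topology: subspace of a countable product of finite discrete spaces.
    [U] is open in the subspace [S] iff every point of [U] in [S] has a basic
    cylinder neighbourhood (fixing coordinates 0..N) whose trace on [S] lies in [U]. *)
Definition seq_open (X : nat -> Type) (S : (forall n, X n) -> Prop)
  (U : (forall n, X n) -> Prop) : Prop :=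
  forall x, S x -> U x ->
    exists N, forall y, S y -> (forall i, i <= N -> y i = x i) -> U y.

Definition seq_continuous (X Y : nat -> Type) (S : (forall n, X n) -> Prop)
  (S' : (forall n, Y n) -> Prop) (f : (forall n, X n) -> forall n, Y n) : Prop :=
  (forall x, S x -> S' (f x)) /\
  forall V, seq_open S' V -> seq_open S (fun x => V (f x)).

Definition squot (T U : Type) (S : T -> Prop) (leT : T -> T -> Prop)
  (S' : U -> Prop) (leU : U -> U -> Prop) (f : T -> U) : Prop :=
  [/\ (forall x, S x -> S' (f x)),
      (forall b, S' b -> exists a, S a /\ f a = b),
      (forall x y, S x -> S y -> leT x y -> leU (f x) (f y)) &
      (forall a b, S' a -> S' b -> leU a b ->
         exists x y, [/\ S x, S y, leT x y, f x = a & f y = b])].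

Definition downset (Q : finPoset) (A : {set Q}) : Prop :=
  forall x y : Q, x \in A -> le y x -> y \in A.

Definition maximal_in (Q : finPoset) (A : {set Q}) (a : Q) : bool :=
  (a \in A) && [forall b in A, le a b ==> (b == a)].

Definition hat (Q R : finPoset) (f : Q -> R) (A : {set Q}) : {set R} :=
  [set y | [exists a, maximal_in A a && le y (f a)]].

(** \mathbb{O}(P) as a subset of \prod_n O(P_n), ordered coordinatewise by inclusion. *)
Definition inOO (P : nat -> finPoset) (p : forall n, P n.+1 -> P n)
  (A : forall n, {set P n}) : Prop :=
  (forall n, downset (A n)) /\ (forall n, hat (p n) (A n.+1) = A n).

Definition OO_le (P : nat -> finPoset) (A B : forall n, {set P n}) : Prop :=
  forall n, A n \subset B n.

Definition OO_join (P : nat -> finPoset) (A B : forall n, {set P n})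
  : forall n, {set P n} := fun n => A n :|: B n.

Definition down_seq (P : nat -> finPoset) (x : forall n, P n)
  : forall n, {set P n} := fun n => [set y | le y (x n)].

(* Main.v *)
Require Import Defs.
From mathcomp Require Import all_boot.
From Stdlib Require Import ClassicalEpsilon Classical Eqdep_dec PeanoNat Lia FunctionalExtensionality.
From mathcomp Require Import zify.
Set Implicit Arguments. Unset Strict Implicit. Unset Printing Implicit Defensive.

Definition pb (P : Prop) : bool := if excluded_middle_informative P then true else false.
Lemma pbE (P : Prop) : pb P <-> P.
Proof. rewrite /pb; case: excluded_middle_informative => h; split => //. Qed.

Section Generic.
Variables (T : nat -> Type) (t : forall n, T n.+1 -> T n).
Definition chain (x : forall n, T n) := forall n, t (x n.+1) = x n.

Lemma ext0 (R : forall n, T n -> Prop) :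
  (forall n y, R n y -> exists y', R n.+1 y' /\ t y' = y) ->
  forall y0, R 0 y0 -> exists x, chain x /\ forall n, R n (x n).
Proof.
move=> step y0 R0.
have stepf : forall n (y : {y | R n y}), {y' | R n.+1 y' /\ t y' = proj1_sig y}.
  move=> n [y Ry] /=; apply: constructive_indefinite_description; exact: step.
pose s := fix s n : {y | R n y} := match n return {y | R n y} with
   0 => exist _ y0 R0
 | n'.+1 => exist _ (proj1_sig (stepf n' (s n'))) (proj1 (proj2_sig (stepf n' (s n')))) end.
exists (fun n => proj1_sig (s n)); split.
- move=> n /=. exact: (proj2 (proj2_sig (stepf n (s n)))).
- move=> n; exact: proj2_sig (s n).
Qed.

Definition upd (s : forall j, T j) k (z : T k) : forall j, T j :=
  fun j => match Nat.eq_dec k j with left e => eq_rect k T z j e | right _ => s j end.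
Lemma upd_eq s k (z : T k) : upd s z k = z.
Proof. rewrite /upd; case: (Nat.eq_dec k k) => // e; by rewrite (UIP_refl_nat _ e). Qed.
Lemma upd_neq s k (z : T k) j : j <> k -> upd s z j = s j.
Proof. rewrite /upd; case: (Nat.eq_dec k j) => // e; by move=> /(_ (esym e)). Qed.

Lemma partial (d : forall n, T n) k (z : T k) :
  exists s : forall j, T j, s k = z /\ forall j, j < k -> t (s j.+1) = s j.
Proof.
elim: k z => [|k IH] z.
  by exists (upd d z); split; [exact: upd_eq|].
have [s [sk sc]] := IH (t z).
exists (upd s z); split; first exact: upd_eq.
move=> j; rewrite ltnS leq_eqVlt => /orP[/eqP->|ltjk].
- rewrite upd_eq upd_neq ?sk //; lia.
- rewrite !upd_neq; [exact: sc | lia | lia].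
Qed.

Lemma ext_from (d : forall n, T n) k (z : T k) (R : forall n, T n -> Prop) :
  (forall n y, k <= n -> R n y -> exists y', R n.+1 y' /\ t y' = y) -> R k z ->
  exists x, chain x /\ x k = z /\ forall n, k <= n -> R n (x n).
Proof.
move=> step Rz.
have [s [sk sc]] := partial d z.
pose R' n (y : T n) := (n <= k -> s n = y) /\ (k <= n -> R n y).
have [x [cx Rx]] : exists x, chain x /\ forall n, R' n (x n).
  apply: (@ext0 R') (s 0) _.
  - move=> n y [h1 h2]. case: (ltnP n k) => nk.
    + exists (s n.+1); split; last by rewrite sc // h1 // ltnW.
      split => // kn. have e : k = n.+1 by apply/eqP; rewrite eqn_leq kn nk.
      subst k; by rewrite sk.
    + have [y' [Ry' ty']] := step n y nk (h2 nk).
      exists y'; split => //; split => h; [lia | done].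
  - split => // k0. have e : k = 0 by lia. subst k. by rewrite sk.
exists x; split => //; split.
- by rewrite -(proj1 (Rx k) (leqnn k)).
- move=> n kn; exact: (proj2 (Rx n) kn).
Qed.

Lemma agree_below x y M : chain x -> chain y -> x M = y M -> forall i, i <= M -> x i = y i.
Proof.
move=> cx cy; elim: M => [|M IH] e i.
  by rewrite leqn0 => /eqP ->.
rewrite leq_eqVlt => /orP [/eqP -> //|]; rewrite ltnS; apply: IH.
by rewrite -cx -cy e.
Qed.
End Generic.

Lemma exists_max (Q : finPoset) (S : {set Q}) a : a \in S -> exists m, maximal_in S m /\ le a m.
Proof.
move=> aS.
suff: forall k b, #|[set c | le b c]| <= k -> b \in S -> exists m, maximal_in S m /\ le b m.
  by move/(_ _ a (leqnn _) aS).
elim=> [|k IH] b.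
  move=> hb; suff: 0 < #|[set c | le b c]| by rewrite ltnNge hb.
  by apply/card_gt0P; exists b; rewrite inE le_refl.
move=> hb bS.
case Mb: (maximal_in S b); first by exists b; split => //; exact: le_refl.
move: Mb; rewrite /maximal_in bS /= => /negbT /forallPn [c].
rewrite !negb_imply => /andP [cS /andP [bc ncb]].
have sub : [set e | le c e] \proper [set e | le b e].
  apply/properP; split.
    apply/subsetP => e; rewrite !inE => ce; exact: le_trans bc ce.
  exists b; rewrite !inE ?le_refl //. apply/negP => cb.
  by rewrite (le_anti cb bc) eqxx in ncb.
have lt := proper_card sub.
have ck : #|[set e | le c e]| <= k by rewrite -ltnS (leq_trans lt hb).
have [m [Mm cm]] := IH c ck cS.
by exists m; split => //; exact: le_trans bc cm.
Qed.

Lemma hat_down (Q R : finPoset) (g : Q -> R) (S : {set Q}) y :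
  (forall a b, le a b -> le (g a) (g b)) ->
  (y \in hat g S) <-> exists a, a \in S /\ le y (g a).
Proof.
move=> mono; rewrite inE; split.
  by move=> /existsP [a /andP [/andP [aS _] ya]]; exists a.
move=> [a [aS ya]]; have [m [Mm am]] := exists_max aS.
apply/existsP; exists m; rewrite Mm /=; exact: le_trans ya (mono _ _ am).
Qed.

Lemma default_el (Q : nat -> finPoset) : (forall n, 0 < #|Q n|) -> forall n, Q n.
Proof. move=> ne n; exact (enum_val (Ordinal (ne n))). Qed.

Lemma lift_maxl (Q : nat -> finPoset) (g : forall n, Q n.+1 -> Q n) (A : forall n, {set Q n}) :
  (forall n, 0 < #|Q n|) -> (forall n a b, le a b -> le (g n a) (g n b)) -> inOO g A ->
  forall k (a : Q k), a \in A k -> exists x, inlim g x /\ (forall j, x j \in A j) /\ le a (x k).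
Proof.
move=> ne mono [dA hA] k a aA.
have incl : forall n x, x \in A n.+1 -> g n x \in A n.
  by move=> n x xA; rewrite -(hA n); apply/(hat_down _ _ (mono n)); exists x; split => //; exact: le_refl.
have step : forall n (m : Q n), maximal_in (A n) m -> exists m', maximal_in (A n.+1) m' /\ g n m' = m.
  move=> n m Mm; have := Mm; rewrite /maximal_in => /andP [mA /forallP Hm].
  move: mA; rewrite -{1}(hA n) inE => /existsP [b /andP [Mb mb]].
  exists b; split => //. have gbA : g n b \in A n by apply: incl; move: Mb => /andP [].
  by have := Hm (g n b); rewrite gbA mb /= => /eqP.
have [m [Mm am]] := exists_max aA.
have [x [cx [xk Rx]]] := @ext_from _ g (default_el ne) k m (fun n y => maximal_in (A n) y)
   (fun n y _ My => step n y My) Mm.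
exists x; split => //; split; last by rewrite xk.
have down : forall M, x M \in A M -> forall i, i <= M -> x i \in A i.
  elim=> [|M IH] xM i; first by rewrite leqn0 => /eqP ->.
  rewrite leq_eqVlt => /orP [/eqP -> //|]; rewrite ltnS; apply: IH.
  by rewrite -(cx M); apply: incl.
move=> j; case: (leqP k j) => kj.
  by have := Rx j kj; rewrite /maximal_in => /andP [].
apply: (down k); last exact: ltnW.
by rewrite xk; move: Mm => /andP [].
Qed.

Lemma lift_pair (Q : nat -> finPoset) (g : forall n, Q n.+1 -> Q n) :
  inv_system g -> forall M (a b : Q M), le a b ->
  exists u v, [/\ inlim g u, inlim g v, lim_le u v, u M = a & v M = b].
Proof.
move=> [ne fq] M a b ab.
pose T n := (Q n * Q n)%type.
pose t n (w : T n.+1) : T n := (g n w.1, g n w.2).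
have d : forall n, T n by move=> n; exact: (default_el ne n, default_el ne n).
have step : forall n (y : T n), M <= n -> le y.1 y.2 -> exists y' : T n.+1, le y'.1 y'.2 /\ t n y' = y.
  move=> n [y1 y2] _ /= l; have [_ [_ lift]] := fq n; have [x [x' [lx e1 e2]]] := lift _ _ l.
  by exists (x, x'); split => //; rewrite /t /= e1 e2.
have [X [cX [XM RX]]] := @ext_from T t d M (a, b) (fun n w => le w.1 w.2) step ab.
exists (fun n => (X n).1), (fun n => (X n).2); split.
- by move=> n; rewrite /= -(cX n).
- by move=> n; rewrite /= -(cX n).
- have down : forall N, le (X N).1 (X N).2 -> forall i, i <= N -> le (X i).1 (X i).2.
    elim=> [|N IH] xN i; first by rewrite leqn0 => /eqP ->.
    rewrite leq_eqVlt => /orP [/eqP -> //|]; rewrite ltnS; apply: IH.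
    rewrite -(cX N) /=. have [_ [mono _]] := fq N. exact: mono.
  move=> n; case: (leqP M n) => Mn; first exact: RX.
  apply: (down M); [exact: RX | exact: ltnW].
- by rewrite XM.
- by rewrite XM.
Qed.

Lemma pigeon (U : finType) (Qp : nat -> Prop) (g : nat -> U) :
  (forall m, exists M, m <= M /\ Qp M) ->
  exists u, forall m, exists M, [/\ m <= M, Qp M & g M = u].
Proof.
move=> inf; apply: NNPP => nex.
have bnd : forall u, exists m, forall M, m <= M -> Qp M -> g M <> u.
  move=> u; apply: NNPP => H; apply: nex; exists u => m; apply: NNPP => H2; apply: H.
  by exists m => M mM QM gM; apply: H2; exists M.
pose B u := proj1_sig (constructive_indefinite_description _ (bnd u)).
have HB u : forall M, B u <= M -> Qp M -> g M <> u := proj2_sig (constructive_indefinite_description _ (bnd u)).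
have [M [mM QM]] := inf (\max_(u : U) B u).
apply: (HB (g M) M) => //; apply: leq_trans mM; exact: leq_bigmax.
Qed.

Lemma unif_cont (P H : nat -> finPoset) (p : forall n, P n.+1 -> P n) (h : forall n, H n.+1 -> H n)
  (f : (forall n, P n) -> forall n, H n)
  (fcont : seq_continuous (inlim p) (inlim h) f) n :
  exists M, forall x y, inlim p x -> inlim p y -> (forall i, i <= M -> x i = y i) -> f x n = f y n.
Proof.
apply: NNPP => nM.
have bad : forall M, exists xy : (forall n, P n) * (forall n, P n),
   [/\ inlim p xy.1, inlim p xy.2, (forall i, i <= M -> xy.1 i = xy.2 i) & f xy.1 n <> f xy.2 n].
  move=> M; apply: NNPP => Hb; apply: nM; exists M => x y ix iy agr; apply: NNPP => ne; apply: Hb.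
  by exists (x, y); split.
pose XY M := proj1_sig (constructive_indefinite_description _ (bad M)).
have HXY M : [/\ inlim p (XY M).1, inlim p (XY M).2, (forall i, i <= M -> (XY M).1 i = (XY M).2 i) & f (XY M).1 n <> f (XY M).2 n]
  := proj2_sig (constructive_indefinite_description _ (bad M)).
pose X M := (XY M).1.
pose IO k (z : P k) := forall m, exists M, m <= M /\ X M k = z.
have [z0 Hz0] := @pigeon (P 0) (fun _ => True) (fun M => X M 0) (fun m => ex_intro _ m (conj (leqnn m) I)).
have base : IO 0 z0 by move=> m; have [M [mM _ e]] := Hz0 m; exists M.
have step : forall k z, IO k z -> exists w, IO k.+1 w /\ p k w = z.
  move=> k z Iz; have [w Hw] := @pigeon (P k.+1) (fun M => X M k = z) (fun M => X M k.+1) Iz.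
  exists w; split; first by move=> m; have [M [mM _ e]] := Hw m; exists M.
  have [M [_ e1 e2]] := Hw 0. have [iX _ _ _] := HXY M.
  by rewrite -e2 -e1; apply: iX.
have [Z [cZ IZ]] := @ext0 _ p IO step z0 base.
have [_ fo] := fcont.
pose V (w : forall n, H n) := w n = f Z n.
have oV : seq_open (inlim h) V.
  by move=> w iw Vw; exists n => y iy agr; rewrite /V agr.
have [K HK] := fo V oV Z cZ (erefl _).
have [M [KM XK]] := IZ K K.
have [iX iY agr ne] := HXY M.
have ag1 := agree_below iX cZ XK.
apply: ne; rewrite (HK _ iX ag1) (HK _ iY) // => i iK.
by rewrite -agr ?ag1 // (leq_trans iK KM).
Qed.

Definition qmap (P H : nat -> finPoset) (p : forall n, P n.+1 -> P n)
  (f : (forall n, P n) -> forall n, H n) (A : forall n, {set P n}) : forall n, {set H n} :=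
  fun n => [set z | pb (exists x, (inlim p x /\ forall k, x k \in A k) /\ le z (f x n))].

Definition rmap (P H : nat -> finPoset) (p : forall n, P n.+1 -> P n)
  (f : (forall n, P n) -> forall n, H n) (C : forall n, {set H n}) : forall n, {set P n} :=
  fun k => [set y | pb (exists x, (inlim p x /\ forall j, f x j \in C j) /\ le y (x k))].

Lemma qmapE (P H : nat -> finPoset) (p : forall n, P n.+1 -> P n)
  (f : (forall n, P n) -> forall n, H n) A n z :
  z \in qmap p f A n <-> exists x, (inlim p x /\ forall k, x k \in A k) /\ le z (f x n).
Proof. rewrite inE; exact: pbE. Qed.

Lemma rmapE (P H : nat -> finPoset) (p : forall n, P n.+1 -> P n)
  (f : (forall n, P n) -> forall n, H n) C k y :
  y \in rmap p f C k <-> exists x, (inlim p x /\ forall j, f x j \in C j) /\ le y (x k).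
Proof. rewrite inE; exact: pbE. Qed.

Lemma down_mem (Q : nat -> finPoset) (g : forall n, Q n.+1 -> Q n) (A : forall n, {set Q n}) x :
  (forall n a b, le a b -> le (g n a) (g n b)) -> inOO g A -> inlim g x ->
  forall M, x M \in A M -> forall i, i <= M -> x i \in A i.
Proof.
move=> mono [_ hA] cx.
elim=> [|M IH] xM i; first by rewrite leqn0 => /eqP ->.
rewrite leq_eqVlt => /orP [/eqP -> //|]; rewrite ltnS; apply: IH.
rewrite -(cx M) -(hA M); apply/(hat_down _ _ (mono M)); exists (x M.+1); split=> //; exact: le_refl.
Qed.

Theorem mainTheorem17
  (H P : nat -> finPoset)
  (h : forall n, H n.+1 -> H n) (p : forall n, P n.+1 -> P n)
  (Hsys : inv_system h) (Psys : inv_system p) (Pfr : fraisse p)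
  (f : (forall n, P n) -> forall n, H n)
  (fcont : seq_continuous (inlim p) (inlim h) f)
  (fq : squot (inlim p) (@lim_le P) (inlim h) (@lim_le H) f) :
  exists q : (forall n, {set P n}) -> forall n, {set H n},
    [/\ seq_continuous (inOO p) (inOO h) q,
        squot (inOO p) (@OO_le P) (inOO h) (@OO_le H) q,
        (forall A B, inOO p A -> inOO p B ->
           forall n, q (OO_join A B) n = OO_join (q A) (q B) n) &
        (forall x, inlim p x -> forall n, q (down_seq x) n = down_seq (f x) n)].
Proof.
have [neP fqP] := Psys; have [neH fqH] := Hsys.
have monoP : forall n a b, le a b -> le (p n a) (p n b) by move=> n; case: (fqP n) => _ [].
have monoH : forall n a b, le a b -> le (h n a) (h n b) by move=> n; case: (fqH n) => _ [].
case: fq => fS fsurj fmono flift.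
have UC := unif_cont fcont.
have inq : forall A, inOO h (qmap p f A).
  move=> A; split.
    move=> n z z' /qmapE [x [px zx]] z'z; apply/qmapE; exists x; split=> //; exact: le_trans z'z zx.
  move=> n; apply/setP => y; apply/idP/idP.
    move/(hat_down _ _ (monoH n)) => [a [/qmapE [x [px ax]] ya]]; apply/qmapE; exists x; split => //.
    apply: le_trans ya _; rewrite -(fS x (proj1 px) n); exact: monoH ax.
  move/qmapE => [x [px yx]]; apply/(hat_down _ _ (monoH n)); exists (f x n.+1); split.
    apply/qmapE; exists x; split => //; exact: le_refl.
  by rewrite (fS x px.1 n).
have QC : forall n, exists M, forall A B, inOO p A -> inOO p B ->
    (forall i, i <= M -> A i = B i) -> qmap p f A n = qmap p f B n.
  move=> n; have [M HM] := UC n; exists M.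
  have sub : forall A B, inOO p B -> A M = B M -> qmap p f A n \subset qmap p f B n.
    move=> A B OB e; apply/subsetP => z /qmapE [x [[ix xA] zx]].
    have xMB : x M \in B M by rewrite -e.
    have [x' [ix' [x'B xx']]] := lift_maxl neP monoP OB xMB.
    have [u [v [iu iv uv uM vM]]] := lift_pair Psys xx'.
    have e1 : f x n = f u n by apply: HM => //; apply: (agree_below ix iu); rewrite uM.
    have e2 : f v n = f x' n by apply: HM => //; apply: (agree_below iv ix'); rewrite vM.
    apply/qmapE; exists x'; split => //.
    by apply: le_trans zx _; rewrite e1 -e2; apply: fmono.
  move=> A B OA OB agr; apply/eqP; rewrite eqEsubset !sub // agr //.
have QCN : forall N, exists M, forall A B, inOO p A -> inOO p B ->
    (forall i, i <= M -> A i = B i) -> forall i, i <= N -> qmap p f A i = qmap p f B i.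
  elim=> [|N [M1 HM1]].
    have [M HM] := QC 0; exists M => A B OA OB agr i; rewrite leqn0 => /eqP ->; exact: HM.
  have [M2 HM2] := QC N.+1; exists (maxn M1 M2) => A B OA OB agr i.
  rewrite leq_eqVlt => /orP [/eqP ->|]; first by apply: HM2 => // j jM; apply: agr; lia.
  rewrite ltnS; apply: HM1 => // j jM; apply: agr; lia.
have inr : forall C, inOO p (rmap p f C).
  move=> C; split.
    move=> n z z' /rmapE [x [px zx]] z'z; apply/rmapE; exists x; split=> //; exact: le_trans z'z zx.
  move=> n; apply/setP => y; apply/idP/idP.
    move/(hat_down _ _ (monoP n)) => [a [/rmapE [x [px ax]] ya]]; apply/rmapE; exists x; split => //.
    apply: le_trans ya _; rewrite -(proj1 px n); exact: monoP ax.
  move/rmapE => [x [px yx]]; apply/(hat_down _ _ (monoP n)); exists (x n.+1); split.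
    apply/rmapE; exists x; split => //; exact: le_refl.
  by rewrite (proj1 px n).
have rmono : forall C C', OO_le C C' -> OO_le (rmap p f C) (rmap p f C').
  move=> C C' CC' k; apply/subsetP => y /rmapE [x [[ix xC] yx]]; apply/rmapE; exists x.
  by split => //; split => // j; apply: (subsetP (CC' j)).
have qr : forall C, inOO h C -> qmap p f (rmap p f C) = C.
  move=> C OC; apply: functional_extensionality_dep => n; apply/setP => z; apply/idP/idP.
    move=> /qmapE [x [[ix xr] zx]]; have [M HM] := UC n.
    have /rmapE [d [[id dC] xd]] := xr M.
    have [u [v [iu iv uv uM vM]]] := lift_pair Psys xd.
    have e1 : f x n = f u n by apply: HM => //; apply: (agree_below ix iu); rewrite uM.
    have e2 : f v n = f d n by apply: HM => //; apply: (agree_below iv id); rewrite vM.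
    apply: (proj1 OC n) (dC n) _.
    by apply: le_trans zx _; rewrite e1 -e2; apply: fmono.
  move=> zC; have [w [iw [wC zw]]] := lift_maxl neH monoH OC zC.
  have [x [ix fx]] := fsurj w iw.
  apply/qmapE; exists x; split; last by rewrite fx.
  split => // k; apply/rmapE; exists x; split; last exact: le_refl.
  by split => // j; rewrite fx.
exists (qmap p f); split.
- split; first by move=> A _; exact: inq.
  move=> V oV A OA VqA; have [N HN] := oV _ (inq A) VqA.
  have [M HM] := QCN N; exists M => B OB agr.
  apply: HN; first exact: inq.
  move=> i iN; exact: HM.
- split.
  + by move=> A _; exact: inq.
  + by move=> C OC; exists (rmap p f C); split; [exact: inr | exact: qr].
  + move=> A B _ _ AB n; apply/subsetP => z /qmapE [x [[ix xA] zx]]; apply/qmapE; exists x.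
    by split=> //; split=> // k; apply: (subsetP (AB k)).
  + move=> a b Oa Ob ab; exists (rmap p f a), (rmap p f b); split; auto.
- move=> A B OA OB n; apply/setP => z; rewrite /OO_join [in RHS]inE; apply/idP/orP.
    move=> /qmapE [x [[ix xAB] zx]].
    have xAB' : forall k, x k \in A k \/ x k \in B k by move=> k; move: (xAB k); rewrite /OO_join inE => /orP.
    case: (classic (forall m, exists M, m <= M /\ x M \in A M)) => [inf|ninf].
      left; apply/qmapE; exists x; split => //; split => // k.
      have [M [kM xM]] := inf k; exact: (down_mem monoP OA ix xM).
    right; apply/qmapE; exists x; split => //; split => // k.
    have [m Hm] : exists m, forall M, m <= M -> x M \notin A M.
      apply: NNPP => H1; apply: ninf => m; apply: NNPP => H2; apply: H1; exists m => M mM.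
      by apply/negP => xM; apply: H2; exists M.
    have xB : x (maxn k m) \in B (maxn k m).
      case: (xAB' (maxn k m)) => // xA; by move: (Hm (maxn k m) (leq_maxr _ _)); rewrite xA.
    exact: (down_mem monoP OB ix xB (leq_maxl _ _)).
  case=> /qmapE [x [[ix xA] zx]]; apply/qmapE; exists x; split => //; split => // k;
    by rewrite /OO_join inE xA ?orbT.
- move=> x ix n; apply/setP => z; apply/idP/idP.
    move=> /qmapE [y [[iy yx] zy]]; rewrite inE; apply: le_trans zy _.
    by apply: fmono => // k; move: (yx k); rewrite inE.
  rewrite inE => zx; apply/qmapE; exists x; split => //; split => // k; by rewrite inE le_refl.
Qed.
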